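(* Let $N\ge 2$ and $M\ge 1$ be integers and $P_0,\dots,P_{N-1}\ge 0$. Let $\{s_n^{(m)}: 0\le n\le N-1,\ 1\le m\le M\}$ be independent complex random variables such that, for each $n$, $s_n^{(1)},\dots,s_n^{(M)}$ are identically distributed with $\mathbb{E}[|s_n^{(m)}|^2]=1$ and $\mathbb{E}[|s_n^{(m)}|^4]=\mu_{4,n}$. Define the averaged autocorrelation $$\overline r_k=\frac{1}{M}\sum_{m=1}^M\sum_{n=0}^{N-1}P_n|s_n^{(m)}|^2e^{j\frac{2\pi}{N}nk},\qquad k=0,\dots,N-1.$$ Then $$\mathbb{E}[|\overline r_0|^2]=\frac{1}{M}\sum_{n=0}^{N-1}P_n^2(\mu_{4,n}-1)+\Big(\sum_{n=0}^{N-1}P_n\Big)^2,$$ $$\sum_{k=1}^{N-1}\mathbb{E}[|\overline r_k|^2]=\frac{N-1}{M}\sum_{n=0}^{N-1}P_n^2(\mu_{4,n}-1)+N\sum_{n=0}^{N-1}P_n^2-\Big(\sum_{n=0}^{N-1}P_n\Big)^2,$$ and consequently the matched-filter sensing SINR for target $q$ under coherent processing of the $M$ symbols is $$\mathrm{SINR}_q^{\mathrm{MF}}=\frac{\sigma_{\alpha_q}^2\,\mathbb{E}[|\overline r_0|^2]}{\frac{\sum_{i\ne q}\sigma_{\alpha_i}^2}{N-1}\sum_{k=1}^{N-1}\mathbb{E}[|\overline r_k|^2]+\frac{\sigma_z^2}{M}\sum_{n=0}^{N-1}P_n}.$$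
   Context: Setting: a monostatic OFDM sensing system with $N$ subcarriers transmits $M$ independent OFDM symbols $x^{(m)}[t]=\frac{1}{\sqrt N}\sum_{n}\sqrt{P_n}s_n^{(m)}e^{j\frac{2\pi}{N}nt}$; the echo contains $Q$ point targets with reflection coefficients $\alpha_i\sim\mathcal{CN}(0,\sigma_{\alpha_i}^2)$ and integer delays, plus AWGN of variance $\sigma_z^2$. The receiver correlates with the known transmitted symbols (matched filtering) and averages coherently over the $M$ symbols. The matched-filter SINR of target $q$ is the expected mainlobe power $\sigma_{\alpha_q}^2\mathbb{E}[|\overline r_0|^2]$ divided by the expected interference from the other targets (whose relative delays are modeled as uniformly distributed over the nonzero lags $\{1,\dots,N-1\}$, so each contributes $\sigma_{\alpha_i}^2$ times the average of $\mathbb{E}[|\overline r_k|^2]$ over $k=1,\dots,N-1$) plus the expected filtered noise power. *)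

(* Defs.v *)
From HB Require Import structures.
From mathcomp Require Import all_boot all_order all_algebra.
From mathcomp Require Import all_classical all_reals all_analysis.
From mathcomp Require Import complex.
Set Implicit Arguments. Unset Strict Implicit. Unset Printing Implicit Defensive.
Import Order.TTheory GRing.Theory Num.Theory.
Local Open Scope ring_scope.
Local Open Scope classical_set_scope.
Local Open Scope complex_scope.

Definition c2R2 {R : realType} (z : R[i]) : (R * R)%type := (complex.Re z, complex.Im z).

Definition cabs2 {R : realType} (z : R[i]) : R := complex.Re z ^+ 2 + complex.Im z ^+ 2.

Definition expj {R : realType} (theta : R) : R[i] := Complex (cos theta) (sin theta).

(* A complex random variable: its real and imaginary parts are jointly
   measurable (measurable into R x R with the product sigma-algebra). *)
Definition cmeasurable {d : measure_display} {T : measurableType d}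
  {R : realType} (X : T -> R[i]) : Prop :=
  measurable_fun setT (fun w => c2R2 (X w)).

Definition mutually_independent {d : measure_display} {T : measurableType d}
  {R : realType} (P : probability T R) {I : finType} (X : I -> T -> R[i]) : Prop :=
  forall (J : {set I}) (B : I -> set (R * R)%type),
    (forall i, measurable (B i)) ->
    P (\bigcap_(i in [set` J]) ((fun w => c2R2 (X i w)) @^-1` B i)) =
    (\prod_(i in J) P ((fun w => c2R2 (X i w)) @^-1` B i))%E.

Definition identically_distributed {d : measure_display} {T : measurableType d}
  {R : realType} (P : probability T R) (X Y : T -> R[i]) : Prop :=
  forall B : set (R * R)%type, measurable B ->
    P ((fun w => c2R2 (X w)) @^-1` B) = P ((fun w => c2R2 (Y w)) @^-1` B).

Definition rbar {R : realType} {T : Type} (N M : nat) (Pw : 'I_N -> R)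
  (s : 'I_N -> 'I_M -> T -> R[i]) (k : nat) (w : T) : R[i] :=
  (M%:R^-1)%:C * \sum_(m < M) \sum_(n < N)
     (Pw n * cabs2 (s n m w))%:C * expj (2 * pi * n%:R * k%:R / N%:R).

(* E[|rbar_k|^2] as a real number (its finiteness is part of the theorem). *)
Definition Er2 {d : measure_display} {T : measurableType d} {R : realType}
  (P : probability T R) (N M : nat) (Pw : 'I_N -> R)
  (s : 'I_N -> 'I_M -> T -> R[i]) (k : nat) : R :=
  fine (\int[P]_w (cabs2 (rbar Pw s k w))%:E).

(* Expected filtered noise power after matched filtering and coherent
   averaging over M symbols (taken from the system model). *)
Definition noise_power {R : realType} (N M : nat) (Pw : 'I_N -> R) (sz2 : R) : R :=
  sz2 / M%:R * \sum_(n < N) Pw n.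

(* Matched-filter SINR of target q (definition from the system model):
   mainlobe power / (interference of the other targets, each with the
   relative delay uniform over the nonzero lags 1..N-1, + noise power). *)
Definition SINR_MF {d : measure_display} {T : measurableType d} {R : realType}
  (P : probability T R) (N M : nat) (Pw : 'I_N -> R)
  (s : 'I_N -> 'I_M -> T -> R[i]) (Q : nat) (sa2 : 'I_Q -> R) (sz2 : R)
  (q : 'I_Q) : R :=
  sa2 q * Er2 P Pw s 0 /
  (\sum_(i < Q | i != q) sa2 i * ((N.-1)%:R^-1 * \sum_(1 <= k < N) Er2 P Pw s k)
   + noise_power M Pw sz2).

(* Main.v *)
Require Import Defs.
From HB Require Import structures.
From mathcomp Require Import all_boot all_order all_algebra.
From mathcomp Require Import all_classical all_reals all_analysis.
From mathcomp Require Import complex.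
From mathcomp Require Import measurable_realfun.
Import Order.TTheory GRing.Theory Num.Theory.
Local Open Scope ring_scope.
Local Open Scope classical_set_scope.
From mathcomp Require Import ring lra.
Section indep.
Local Open Scope ereal_scope.
Context d (T : measurableType d) (R : realType) (P : probability T R).
Variables (X Y : T -> R) (mX : measurable_fun setT X) (mY : measurable_fun setT Y).
Hypotheses (X0 : forall t, (0 <= X t)%R) (Y0 : forall t, (0 <= Y t)%R).
Hypothesis indXY : forall A B, measurable A -> measurable B ->
  P (X @^-1` A `&` Y @^-1` B) = P (X @^-1` A) * P (Y @^-1` B).

Let XY w := (X w, Y w).
Let mXY : measurable_fun setT XY := measurable_fun_pair mX mY.
Let Xm : {mfun T >-> R} := HB.pack X (isMeasurableFun.Build _ _ _ _ X mX).
Let Ym : {mfun T >-> R} := HB.pack Y (isMeasurableFun.Build _ _ _ _ Y mY).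
Let XYm : {mfun T >-> (R * R)%type} := HB.pack XY (isMeasurableFun.Build _ _ _ _ XY mXY).

Lemma indep_integralM :
  \int[P]_w (X w * Y w)%:E = \int[P]_w (X w)%:E * \int[P]_w (Y w)%:E.
Proof.
pose m1 := distribution P Xm. pose m2 := distribution P Ym.
have E A : measurable A -> (m1 \x m2) A = distribution P XYm A.
  apply: product_measure_unique => A1 B1 mA mB.
  rewrite /distribution /pushforward /= -indXY //.
pose f (z : R * R) := (`|z.1| * `|z.2|)%R.
have mf : measurable_fun setT f.
  apply: measurable_funM.
    exact: measurableT_comp (@normr_measurable R setT) measurable_fst.
  exact: measurableT_comp (@normr_measurable R setT) measurable_snd.
have -> : \int[P]_w (X w * Y w)%:E = \int[P]_w ((EFin \o f) \o XYm) w.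
  apply: eq_integral => w _ /=; rewrite /f /= !ger0_norm //.
rewrite -ge0_integral_distribution //; first last.
- by move=> z /=; rewrite lee_fin /f mulr_ge0.
- exact/measurable_EFinP.
rewrite (eq_measure_integral (m1 \x m2)); first last.
  move=> A mA _; first [exact: (esym (E A mA)) | apply/esym; apply: E | idtac "FAIL"].
rewrite fubini_tonelli1 //; first last.
- by move=> z /=; rewrite lee_fin /f mulr_ge0.
- exact/measurable_EFinP.
rewrite /fubini_F /f /=.
under eq_integral => x _.
  under eq_integral do rewrite EFinM.
  rewrite ge0_integralZl_EFin //.
  over.
  first [by apply/measurable_EFinP; apply: normr_measurable | by apply: measurableT_comp => // | idtac "FAILX"].
rewrite /= ge0_integralZr //; last by apply: integral_ge0 => y _; rewrite lee_fin.
have h1 (Z : {mfun T >-> R}) : (forall t, (0 <= Z t)%R) ->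
    \int[distribution P Z]_x (`|x|)%:E = \int[P]_w (Z w)%:E.
  move=> Z0.
  have mabs : measurable_fun setT (fun x : R => (`|x|)%:E).
    by apply/measurable_EFinP; apply: normr_measurable.
  rewrite (ge0_integral_distribution Z mabs) //.
  by apply: eq_integral => w _ /=; rewrite ger0_norm.
rewrite h1 // h1 //.
by apply/measurable_EFinP; apply: normr_measurable.
Qed.
End indep.

Section prob.
Local Open Scope ereal_scope.
Context {d : measure_display} {T : measurableType d} {R : realType} (P : probability T R).

Lemma integrable_ge0 (f : T -> R) x : measurable_fun setT f ->
  (forall w, (0 <= f w)%R) -> \int[P]_w (f w)%:E = x%:E ->
  P.-integrable setT (fun w => (f w)%:E).
Proof.
move=> mf f0 fx; apply/integrableP; split; first exact/measurable_EFinP.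
under eq_integral do rewrite gee0_abs ?lee_fin //.
by rewrite fx ltry.
Qed.

Lemma int_dsum (I : finType) (Y : I -> I -> T -> R) (c e : I -> I -> R) :
  (forall a b, P.-integrable setT (fun w => (Y a b w)%:E)) ->
  (forall a b, \int[P]_w (Y a b w)%:E = (e a b)%:E) ->
  \int[P]_w (\sum_a \sum_b c a b * Y a b w)%:E = (\sum_a \sum_b c a b * e a b)%:E.
Proof.
move=> iY eY.
under eq_integral do rewrite pair_big /= -sumEFin.
rewrite integral_sum //; last first.
  move=> ab; under eq_fun do rewrite EFinM; exact: integrableZl.
rewrite pair_big /= -sumEFin; apply: eq_bigr => ab _.
under eq_integral do rewrite EFinM.
by rewrite integralZl // eY.
Qed.

Lemma cabs2_ge0 (z : R[i]) : (0 <= cabs2 z)%R.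
Proof. by rewrite /cabs2 addr_ge0 // sqr_ge0. Qed.

Lemma cabs2_meas (Z : T -> R[i]) : cmeasurable Z ->
  measurable_fun setT (fun w => cabs2 (Z w)).
Proof.
move=> mZ.
have mg : measurable_fun setT (fun z : R * R => z.1 ^+ 2 + z.2 ^+ 2)%R.
  apply: measurable_funD; apply: measurable_funX.
    exact: measurable_fst.
  exact: measurable_snd.
exact: (measurableT_comp mg mZ).
Qed.

Lemma pair_indep (I : finType) (Z : I -> T -> R[i]) :
  (forall i, cmeasurable (Z i)) -> mutually_independent P Z ->
  forall a b, a != b ->
  \int[P]_w (cabs2 (Z a w) * cabs2 (Z b w))%:E =
  \int[P]_w (cabs2 (Z a w))%:E * \int[P]_w (cabs2 (Z b w))%:E.
Proof.
move=> mZ iZ a b ab.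
apply: indep_integralM.
- exact: cabs2_meas.
- exact: cabs2_meas.
- by move=> t; exact: cabs2_ge0.
- by move=> t; exact: cabs2_ge0.
move=> A B mA mB.
pose g (z : R * R) := (z.1 ^+ 2 + z.2 ^+ 2)%R.
have mg : measurable_fun setT g.
  apply: measurable_funD; apply: measurable_funX.
    exact: measurable_fst.
  exact: measurable_snd.
have mgA : measurable (g @^-1` A) by rewrite -[_ @^-1` _]setTI; exact: mg.
have mgB : measurable (g @^-1` B) by rewrite -[_ @^-1` _]setTI; exact: mg.
pose F i := if i == a then g @^-1` A else if i == b then g @^-1` B else setT.
have mF i : measurable (F i) by rewrite /F; case: ifP => _ //; case: ifP.
have := iZ [set a; b]%SET F mF.
have Fa : F a = g @^-1` A by rewrite /F eqxx.
have Fb : F b = g @^-1` B by rewrite /F eq_sym (negbTE ab) eqxx.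
rewrite big_setU1 /=; last by rewrite inE.
rewrite big_set1 Fa Fb => <-.
congr (P _); apply/seteqP; split => w /=.
  move=> [hA hB] i /=; rewrite !inE => /orP[/eqP->|/eqP->].
    by rewrite Fa.
  by rewrite Fb.
move=> h; split.
  by have := h a; rewrite Fa; apply; rewrite /= !inE eqxx.
by have := h b; rewrite Fb; apply; rewrite /= !inE eqxx orbT.
Qed.
End prob.

Local Open Scope complex_scope.
Section T.
Variable R : realType.
Lemma mulC (a b c d : R) : (a +i* b) * (c +i* d) = (a*c - b*d) +i* (a*d + b*c).
Proof. by []. Qed.
Lemma ReD (x y : R[i]) : complex.Re (x + y) = complex.Re x + complex.Re y.
Proof. by case: x; case: y. Qed.
Lemma ImD (x y : R[i]) : complex.Im (x + y) = complex.Im x + complex.Im y.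
Proof. by case: x; case: y. Qed.
Lemma ReRM (r : R) (x : R[i]) : complex.Re (r%:C * x) = r * complex.Re x.
Proof. case: x => a b /=. ring. Qed.
Lemma ImRM (r : R) (x : R[i]) : complex.Im (r%:C * x) = r * complex.Im x.
Proof. case: x => a b /=. ring. Qed.
Lemma expjD (a b : R) : expj a * expj b = expj (a + b).
Proof. rewrite /expj mulC cosD sinD; congr (_ +i* _); ring. Qed.
Lemma tst (x y z : R) : x * y / z = y * (x / z).
Proof. ring. Qed.
End T.
Section T2.
Variable R : realType.
Lemma ReSum (I : Type) (r : seq I) (F : I -> R[i]) :
  complex.Re (\sum_(i <- r) F i) = \sum_(i <- r) complex.Re (F i).
Proof.
apply: (big_rec2 (fun a b => complex.Re a = b)) => // i y1 y2 _ <-.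
by rewrite ReD.
Qed.
Lemma expjX (a : R) k : expj a ^+ k = expj (k%:R * a).
Proof.
elim: k => [|k IH]; first by rewrite expr0 mul0r /expj cos0 sin0.
by rewrite exprS IH expjD mulrS mulrDl mul1r.
Qed.
Lemma cos_lt1 (x : R) : 0 < x < pi *+ 2 -> cos x < 1.
Proof.
move=> /andP[x0 x2].
have -> : x = (x / 2) *+ 2 by rewrite -mulr_natr mulfVK // pnatr_eq0.
rewrite cos_mulr2n.
have s0 : 0 < sin (x / 2).
  apply: sin_gt0_pi; apply/andP; split; first by rewrite divr_gt0.
  rewrite ltr_pdivrMr // mulr_natr //.
have := cos2Dsin2 (x / 2).
move=> h. have hc : cos (x / 2) ^+ 2 = 1 - sin (x / 2) ^+ 2.
  lra.
rewrite hc -mulr_natr. nra.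
Qed.
Lemma cos_2pin (d : nat) : cos (pi *+ 2 *+ d) = 1 :> R.
Proof. by have := periodicn (@cosD2pi R) d 0; rewrite add0r cos0. Qed.
Lemma sin_2pin (d : nat) : sin (pi *+ 2 *+ d) = 0 :> R.
Proof. by have := periodicn (@sinD2pi R) d 0; rewrite add0r sin0. Qed.
Lemma sum_cos (N d : nat) : (0 < d < N)%N ->
  \sum_(k < N) cos (2 * pi * d%:R * k%:R / N%:R) = 0 :> R.
Proof.
move=> /andP[d0 dN].
have N0 : (N%:R : R) != 0 by rewrite pnatr_eq0 -lt0n (ltn_trans d0 dN).
pose z := expj (2 * pi * d%:R / N%:R : R).
have Hk k : expj (2 * pi * d%:R * k%:R / N%:R) = z ^+ k.
  by rewrite /z expjX; congr expj; ring.
have zN : z ^+ N = 1.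
  rewrite /z expjX.
  have -> : (N%:R * (2 * pi * d%:R / N%:R)) = pi *+ 2 *+ d :> R.
    by rewrite mulrC divfK // mulr_natr mulr_natl.
  by rewrite /expj cos_2pin sin_2pin.
have z1 : z != 1.
  apply/eqP => /(congr1 (@complex.Re R)) /=; apply/eqP; rewrite lt_eqF //.
  have Np : (0:R) < N%:R by rewrite ltr0n (ltn_trans d0 dN).
  have dp : (0:R) < d%:R by rewrite ltr0n.
  have dlt : (d%:R : R) < N%:R by rewrite ltr_nat.
  have pp := pi_gt0 R.
  apply: cos_lt1; apply/andP; split.
    by apply: divr_gt0 => //; apply: mulr_gt0 => //; apply: mulr_gt0.
  rewrite ltr_pdivrMr // mulr2n; nra.
have S0 : \sum_(k < N) z ^+ k = 0.
  have : (z - 1) * \sum_(k < N) z ^+ k = 0.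
    by rewrite -subrX1 zN subrr.
  by move/eqP; rewrite mulf_eq0 subr_eq0 (negbTE z1) /= => /eqP.
transitivity (\sum_(k < N) complex.Re (z ^+ k)); last by rewrite -ReSum S0.
by apply: eq_bigr => k _; rewrite -Hk.
Qed.

Lemma ImSum (I : Type) (r : seq I) (F : I -> R[i]) :
  complex.Im (\sum_(i <- r) F i) = \sum_(i <- r) complex.Im (F i).
Proof.
apply: (big_rec2 (fun a b => complex.Im a = b)) => // i y1 y2 _ <-.
by rewrite ImD.
Qed.

Definition th (N n k : nat) : R := 2 * pi * n%:R * k%:R / N%:R.
Definition Cf (N n n' k : nat) : R :=
  cos (th N n k) * cos (th N n' k) + sin (th N n k) * sin (th N n' k).

Lemma orth (N n n' : nat) : (n < N)%N -> (n' < N)%N ->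
  \sum_(k < N) Cf N n n' k = if n == n' then N%:R else 0.
Proof.
move=> nN n'N; rewrite /Cf.
case: ltngtP => [nn|nn|<-].
- under eq_bigr => k _.
    rewrite -cosB -cosN opprB.
    have -> : th N n' k - th N n k = 2 * pi * (n' - n)%:R * k%:R / N%:R.
      rewrite /th natrB; last exact: ltnW.
      ring.
    over.
  by apply: sum_cos; rewrite subn_gt0 nn /= (leq_ltn_trans (leq_subr _ _) n'N).
- under eq_bigr => k _.
    rewrite -cosB.
    have -> : th N n k - th N n' k = 2 * pi * (n - n')%:R * k%:R / N%:R.
      rewrite /th natrB; last exact: ltnW.
      ring.
    over.
  by apply: sum_cos; rewrite subn_gt0 nn /= (leq_ltn_trans (leq_subr _ _) nN).
- under eq_bigr do rewrite -cosB subrr cos0.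
  by rewrite sumr_const card_ord.
Qed.

Lemma cabs2_lin (I : finType) (c : R) (x t : I -> R) :
  cabs2 (c%:C * \sum_i (x i)%:C * expj (t i)) =
  \sum_i \sum_j c ^+ 2 * x i * x j * (cos (t i) * cos (t j) + sin (t i) * sin (t j)).
Proof.
rewrite /cabs2 ReRM ImRM ReSum ImSum.
under eq_bigr do rewrite ReRM.
under [X in _ + (_ * X) ^+ 2 = _]eq_bigr do rewrite ImRM.
rewrite /=.
have E (u v : I -> R) : (\sum_i u i) * (\sum_j v j) = \sum_i \sum_j u i * v j.
  by rewrite mulr_suml; apply: eq_bigr => i _; rewrite mulr_sumr.
rewrite !exprMn !expr2 !E -mulrDr -big_split mulr_sumr /=.
apply: eq_bigr => i _; rewrite -big_split mulr_sumr /=.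
by apply: eq_bigr => j _; ring.
Qed.
End T2.

Arguments Cf {R}.
Arguments th {R}.
Section alg.
Variable R : realType.

Lemma cabs2_rbar (T : Type) N M (Pw : 'I_N -> R) (s : 'I_N -> 'I_M -> T -> R[i]) k w :
  cabs2 (rbar Pw s k w) = \sum_(a : 'I_M * 'I_N) \sum_(b : 'I_M * 'I_N)
     (M%:R^-1 ^+ 2 * Pw a.2 * Pw b.2 * Cf N a.2 b.2 k) *
     (cabs2 (s a.2 a.1 w) * cabs2 (s b.2 b.1 w)).
Proof.
rewrite /rbar pair_big /= cabs2_lin.
apply: eq_bigr => a _; apply: eq_bigr => b _; rewrite /Cf /th; ring.
Qed.

Lemma sum_pair2 M N (g : 'I_N -> R) :
  \sum_(a : 'I_M * 'I_N) g a.2 = M%:R * \sum_n g n.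
Proof.
transitivity (\sum_(m < M) \sum_(n < N) g n); first by rewrite pair_big.
by rewrite sumr_const card_ord mulr_natl.
Qed.

Lemma sum_e (I : finType) (f : I -> I -> R) (mu : I -> R) :
  \sum_a \sum_b f a b * (if a == b then mu a else 1) =
  \sum_a \sum_b f a b + \sum_a f a a * (mu a - 1).
Proof.
rewrite -big_split; apply: eq_bigr => a _ /=.
rewrite (bigD1 a) //= eqxx [in RHS](bigD1 a) //=.
under eq_bigr => b hb do rewrite eq_sym (negbTE hb) mulr1.
ring.
Qed.

Lemma sum_ifeq N (n0 : 'I_N) (F : 'I_N -> R) :
  \sum_n (if n0 == n then F n else 0) = F n0.
Proof.
rewrite (bigD1 n0) //= eqxx big1 ?addr0 // => n /negbTE.
by rewrite eq_sym => ->.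
Qed.
End alg.

Section alg2.
Variable R : realType.
Lemma sumsum_mul (I J : finType) (u : I -> R) (v : J -> R) :
  (\sum_i u i) * (\sum_j v j) = \sum_i \sum_j u i * v j.
Proof. by rewrite mulr_suml; apply: eq_bigr => i _; rewrite mulr_sumr. Qed.

Lemma orthR (N n n' : nat) : (n < N)%N -> (n' < N)%N ->
  \sum_(k < N) Cf N n n' k = ((n == n')%:R * N%:R :> R).
Proof. by move=> h1 h2; rewrite orth //; case: eqP; rewrite ?mul1r ?mul0r. Qed.

Lemma sum_eqR N (n0 : 'I_N) (G : 'I_N -> R) (c : R) :
  \sum_n G n * ((n0 == n)%:R * c) = G n0 * c.
Proof.
rewrite (bigD1 n0) //= eqxx mul1r big1 ?addr0 // => n hn.
by rewrite eq_sym (negbTE hn) mul0r mulr0.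
Qed.
End alg2.
Arguments sum_e {R I}.
Arguments sum_pair2 {R M N}.
Arguments sum_eqR {R N}.
Arguments sumsum_mul {R I J}.
Arguments orthR {R}.

Local Close Scope complex_scope.

Theorem theorem1 (d : measure_display) (T : measurableType d) (R : realType)
  (P : probability T R) (N M : nat) (Pw : 'I_N -> R) (mu4 : 'I_N -> R)
  (s : 'I_N -> 'I_M -> T -> R[i]) (Q : nat) (sa2 : 'I_Q -> R) (sz2 : R)
  (q : 'I_Q) :
  (2 <= N)%N -> (1 <= M)%N ->
  (forall n, 0 <= Pw n) ->
  (forall n m, cmeasurable (s n m)) ->
  mutually_independent P (fun nm : 'I_N * 'I_M => s nm.1 nm.2) ->
  (forall n m m', identically_distributed P (s n m) (s n m')) ->
  (forall n m, (\int[P]_w (cabs2 (s n m w))%:E = 1%:E)%E) ->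
  (forall n m, (\int[P]_w ((cabs2 (s n m w)) ^+ 2)%:E = (mu4 n)%:E)%E) ->
  (forall i, 0 <= sa2 i) -> 0 <= sz2 ->
  [/\ (\int[P]_w (cabs2 (rbar Pw s 0 w))%:E =
        (M%:R^-1 * \sum_(n < N) Pw n ^+ 2 * (mu4 n - 1)
         + (\sum_(n < N) Pw n) ^+ 2)%:E)%E,
      ((\sum_(1 <= k < N) \int[P]_w (cabs2 (rbar Pw s k w))%:E) =
        ((N.-1)%:R / M%:R * \sum_(n < N) Pw n ^+ 2 * (mu4 n - 1)
         + N%:R * \sum_(n < N) Pw n ^+ 2 - (\sum_(n < N) Pw n) ^+ 2)%:E)%E
    & SINR_MF P Pw s sa2 sz2 q =
        sa2 q * Er2 P Pw s 0 /
        ((\sum_(i < Q | i != q) sa2 i) / (N.-1)%:R * \sum_(1 <= k < N) Er2 P Pw s k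
         + sz2 / M%:R * \sum_(n < N) Pw n)].
Proof.
move=> N2 M1 Pw0 ms ind idd E2 E4 sa0 sz0.
pose X (a : 'I_M * 'I_N) w := cabs2 (s a.2 a.1 w).
pose e (a b : 'I_M * 'I_N) := if a == b then mu4 a.2 else 1.
have mX a : measurable_fun setT (X a) := cabs2_meas _ (ms a.2 a.1).
have EXX a b : (\int[P]_w (X a w * X b w)%:E = (e a b)%:E)%E.
  rewrite /e; case: eqP => [<-|/eqP ab].
    by under eq_integral do rewrite -expr2; exact: E4.
  have ab' : (a.2, a.1) != (b.2, b.1).
    by move: ab; case: a => a1 a2; case: b => b1 b2; rewrite !xpair_eqE andbC.
  have := @pair_indep _ _ _ P _ (fun nm : 'I_N * 'I_M => s nm.1 nm.2)
    (fun i => ms i.1 i.2) ind _ _ ab'.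
  by rewrite /X /= => ->; rewrite !E2 mule1.
have iXX a b : P.-integrable setT (fun w => (X a w * X b w)%:E).
  apply: (@integrable_ge0 _ _ _ P (fun w => X a w * X b w) (e a b) _ _ (EXX a b)).
    exact: measurable_funM.
  by move=> w; rewrite mulr_ge0 // cabs2_ge0.
have Ek k : (\int[P]_w (cabs2 (rbar Pw s k w))%:E =
   (\sum_a \sum_b (M%:R^-1 ^+ 2 * Pw a.2 * Pw b.2 * Cf N a.2 b.2 k) * e a b)%:E)%E.
  under eq_integral do rewrite cabs2_rbar.
  exact: (@int_dsum _ _ _ P _ (fun a b w => X a w * X b w)).
have M0 : (M%:R : R) != 0 by rewrite pnatr_eq0 -lt0n.
set S1 := \sum_(n < N) Pw n.
set S2 := \sum_(n < N) Pw n ^+ 2.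
set S4 := \sum_(n < N) Pw n ^+ 2 * (mu4 n - 1).
pose Er k := \sum_a \sum_b (M%:R^-1 ^+ 2 * Pw a.2 * Pw b.2 * Cf N a.2 b.2 k) * e a b.
have hS4 (c : R) : \sum_(n < N) c * Pw n * Pw n * (mu4 n - 1) = c * S4.
  by rewrite /S4 mulr_sumr; apply: eq_bigr => n _; ring.
have hS2 (c : R) : \sum_(n < N) c * Pw n * Pw n = c * S2.
  by rewrite /S2 mulr_sumr; apply: eq_bigr => n _; ring.
have Er0 : Er 0%N = M%:R^-1 * S4 + S1 ^+ 2.
  have C0 n n' : Cf N n n' 0 = 1 :> R.
    by rewrite /Cf /th !mulr0 !mul0r cos0 sin0 mul1r mul0r addr0.
  have -> : Er 0%N = \sum_a \sum_b (M%:R^-1 ^+ 2 * Pw a.2 * Pw b.2) * e a b.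
    by apply: eq_bigr => a _; apply: eq_bigr => b _; rewrite C0 mulr1.
  rewrite /e (sum_e (fun a b => M%:R^-1 ^+ 2 * Pw a.2 * Pw b.2) (fun a => mu4 a.2)).
  have -> : \sum_(a : 'I_M * 'I_N) \sum_(b : 'I_M * 'I_N) M%:R^-1 ^+ 2 * Pw a.2 * Pw b.2 =
      M%:R^-1 ^+ 2 * ((\sum_(a : 'I_M * 'I_N) Pw a.2) * (\sum_(b : 'I_M * 'I_N) Pw b.2)).
    rewrite sumsum_mul mulr_sumr; apply: eq_bigr => a _.
    by rewrite mulr_sumr; apply: eq_bigr => b _; ring.
  rewrite sum_pair2 (sum_pair2 (fun n => M%:R^-1 ^+ 2 * Pw n * Pw n * (mu4 n - 1))).
  rewrite hS4 -/S1.
  field; exact: M0.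
have ErS : \sum_(k < N) Er k = N%:R * S2 + M%:R^-1 * N%:R * S4.
  rewrite /Er.
  transitivity (\sum_a \sum_b (M%:R^-1 ^+ 2 * Pw a.2 * Pw b.2 *
                  ((a.2 == b.2)%:R * N%:R)) * e a b).
    rewrite exchange_big; apply: eq_bigr => a _.
    rewrite exchange_big; apply: eq_bigr => b _.
    by rewrite -mulr_suml -mulr_sumr orthR.
  rewrite /e (sum_e (fun a b => M%:R^-1 ^+ 2 * Pw a.2 * Pw b.2 *
                  ((a.2 == b.2)%:R * N%:R)) (fun a => mu4 a.2)).
  have -> : \sum_(a : 'I_M * 'I_N) \sum_(b : 'I_M * 'I_N)
      M%:R^-1 ^+ 2 * Pw a.2 * Pw b.2 * ((a.2 == b.2)%:R * N%:R) =
      \sum_(a : 'I_M * 'I_N) M%:R * (M%:R^-1 ^+ 2 * Pw a.2 * Pw a.2 * N%:R).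
    apply: eq_bigr => a _.
    rewrite (sum_pair2 (fun n => M%:R^-1 ^+ 2 * Pw a.2 * Pw n * ((a.2 == n)%:R * N%:R))).
    by rewrite (sum_eqR a.2 (fun n => M%:R^-1 ^+ 2 * Pw a.2 * Pw n)).
  rewrite (sum_pair2 (fun n => M%:R * (M%:R^-1 ^+ 2 * Pw n * Pw n * N%:R))).
  rewrite (sum_pair2 (fun n => M%:R^-1 ^+ 2 * Pw n * Pw n * ((n == n)%:R * N%:R) * (mu4 n - 1))).
  have -> : \sum_(n < N) M%:R * (M%:R^-1 ^+ 2 * Pw n * Pw n * N%:R) =
      (M%:R * M%:R^-1 ^+ 2 * N%:R) * S2.
    by rewrite -hS2; apply: eq_bigr => n _; ring.
  have -> : \sum_(n < N) M%:R^-1 ^+ 2 * Pw n * Pw n * ((n == n)%:R * N%:R) * (mu4 n - 1) =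
      (M%:R^-1 ^+ 2 * N%:R) * S4.
    by rewrite -hS4; apply: eq_bigr => n _; rewrite eqxx /= mul1r; ring.
  field; exact: M0.
split.
- by rewrite Ek; congr EFin; exact: Er0.
- under eq_bigr do rewrite Ek.
  rewrite sumEFin; congr EFin.
  change (\sum_(1 <= k < N) Er k = N.-1%:R / M%:R * S4 + N%:R * S2 - S1 ^+ 2).
  have hsp : \sum_(k < N) Er k = Er 0%N + \sum_(1 <= k < N) Er k.
    by rewrite -(big_mkord xpredT) big_ltn // ltnW.
  have -> : \sum_(1 <= k < N) Er k = \sum_(k < N) Er k - Er 0%N.
    by rewrite hsp (addrC (Er 0%N)) addrK.
  rewrite ErS Er0.
  have -> : (N.-1)%:R = N%:R - 1 :> R by rewrite -subn1 natrB // ltnW.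
  field; exact: M0.
- rewrite /SINR_MF /noise_power; congr (_ / (_ + _)).
  by rewrite -mulr_suml; ring.
Qed.
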